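(* There is a constant $c_{12}>0$ depending only on $s$ and $p$ such that the following holds. Suppose $0<x<c_{12}$. Let $t_0$ be an arbitrary moment of time with $a_{\min,t_0}>0$, and let $T=Cn\ln\frac{1}{a_{\min,t_0}}$ for an arbitrarily fixed constant positive integer $C$. Then with probability $1-e^{-n^{\Omega(1)}}$, for all $t\in[t_0,t_0+T]$, $$\ln\frac{1}{\max\{\frac1n,a_{\min,t}\}}\le 100C\ln\frac{1}{a_{\min,t_0}}.$$
   Context: Population protocol model: $n$ agents; in each step a scheduler picks an ordered pair (initiator, receiver) of distinct agents uniformly at random; rules written $A:B\mapsto C$ mean an initiator in state $A$ turns a receiver in state $B$ into $C$ (initiator unchanged). Time is counted in steps. Protocol $P_o$ has a source state $X$ (never changed) and states $A_i^+,A_i^{++}$, $i\in\{1,2,3\}$, indices modulo 3, $A_i^?$ denoting either flavor. Rules for each $i$: (1) $A_i^?:A_i^?\mapsto A_i^{++}$; (2) $A_i^?:A_{i+1}^?\mapsto A_{i+1}^+$; (3) $A_i^+:A_{i-1}^?\mapsto A_i^+$ w.p. $p$, else $A_{i-1}^+$; (4) $A_i^{++}:A_{i-1}^?\mapsto A_i^+$ w.p. $2p$, else $A_{i-1}^+$; (5) $X:A_j^?\mapsto A_\ell^+$, $\ell$ uniform in $\{1,2,3\}$. Here $p>0$ is a sufficiently small constant depending on $s$. Notation: $x=\#X/n$ (constant over the execution), $a_i=(\#A_i^++\#A_i^{++})/n$, $s=a_1+a_2+a_3$, $a_{\min}=\min_i a_i$; subscript $t$ denotes the value at step $t$. *)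

(* Defs.v *)
From HB Require Import structures.
From mathcomp Require Import all_boot all_order all_algebra.
From mathcomp Require Import reals sequences exp.
Set Implicit Arguments. Unset Strict Implicit. Unset Printing Implicit Defensive.
Import Order.TTheory GRing.Theory Num.Theory.
Local Open Scope ring_scope.

(* SX = source state X;  SA i b = A_{i+1}^+ (b = false) or
   A_{i+1}^{++} (b = true), i : 'I_3 (indices 1,2,3 of the paper are 0,1,2 here,
   arithmetic mod 3);  SO = an agent not taking part in P_o (inert: it never
   changes and interactions involving it change nothing). *)
Inductive St := SX | SA of 'I_3 & bool | SO.

Definition St_enc (s : St) : option (option ('I_3 * bool)) :=
  match s with SX => None | SA i b => Some (Some (i, b)) | SO => Some None end.
Definition St_dec (o : option (option ('I_3 * bool))) : St :=
  match o with None => SX | Some (Some (i, b)) => SA i b | Some None => SO end.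
Lemma St_encK : cancel St_enc St_dec. Proof. by case. Qed.
HB.instance Definition _ := Finite.copy St (can_type St_encK).

Definition isucc (i j : 'I_3) : bool := (j : nat) == (i.+1 %% 3)%N.

Section Protocol.
Variable R : realType.
Variable p : R.

(* [out a b z] = probability that a receiver in state b, interacting with an
   initiator in state a, ends up in state z (rules (1)-(5); otherwise no change). *)
Definition out (a b z : St) : R :=
  match a, b with
  | SA i ai, SA j _ =>
      if j == i then (z == SA i true)%:R
      else if isucc i j then (z == SA j false)%:R
      else (* j = i-1 : rules (3),(4) *)
        let q := if ai then 2 * p else p in
        q * (z == SA i false)%:R + (1 - q) * (z == SA j false)%:R
  | SX, SA _ _ =>
      3^-1 * (if z is SA _ false then 1 else 0)
  | _, _ => (z == b)%:R
  end.

Variable n : nat.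
Definition config := {ffun 'I_n -> St}.

Definition upd (c : config) (v : 'I_n) (z : St) : config :=
  [ffun w => if w == v then z else c w].

Definition trans (c c' : config) : R :=
  \sum_(u : 'I_n) \sum_(v : 'I_n | u != v)
     (n%:R * (n%:R - 1))^-1 *
     \sum_(z : St) out (c u) (c v) z * (c' == upd c v z)%:R.

(* [stay G k c] = probability that the chain started in c at time 0 satisfies
   G at every time t = 0, 1, ..., k. *)
Fixpoint stay (G : pred config) (k : nat) (c : config) : R :=
  match k with
  | 0 => (G c)%:R
  | k'.+1 => (G c)%:R * \sum_(c' : config) trans c c' * stay G k' c'
  end.

Definition numX (c : config) : nat := #|[set u | c u == SX]|.
Definition numA (c : config) : nat :=
  #|[set u | if c u is SA _ _ then true else false]|.
Definition afrac (c : config) (i : 'I_3) : R :=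
  #|[set u | if c u is SA j _ then j == i else false]|%:R / n%:R.
Definition amin (c : config) : R :=
  Num.min (Num.min (afrac c 0) (afrac c 1)) (afrac c 2).

End Protocol.

Arguments afrac {R n}.
Arguments amin {R n}.

(* Main.v *)
Require Import Defs.
From HB Require Import structures.
From mathcomp Require Import all_boot all_order all_algebra.
From mathcomp Require Import reals sequences exp.
From mathcomp Require Import lra zify ring.
Import Order.TTheory GRing.Theory Num.Theory.
Local Open Scope ring_scope.

Set Implicit Arguments. Unset Strict Implicit.

Definition isA (i : 'I_3) (z : St) : bool := if z is SA j _ then j == i else false.

Lemma card_setsum (T : finType) (P : pred T) : #|[set u | P u]| = (\sum_u (P u : nat))%N.
Proof. rewrite -sum1_card big_mkcond /=; apply eq_bigr => u _; rewrite inE; by case: (P u). Qed.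

Lemma NA_upd n (c : config n) v z i :
  (#|[set u | isA i (upd c v z u)]| + isA i (c v) = #|[set u | isA i (c u)]| + isA i z)%N.
Proof.
rewrite !card_setsum (bigD1 v) //= [X in (_ = X + _)%N](bigD1 v) //= /upd ffunE eqxx.
rewrite (eq_bigr (fun w => isA i (c w) : nat)); last by move=> w /negbTE Hw; rewrite ffunE Hw.
move: (isA i z : nat) (isA i (c v) : nat) => a b. set S := \sum_(_ | _) _. lia.
Qed.

Lemma sum_ind (R : realType) (T : finType) (e : T) (g : T -> R) :
  \sum_(c' : T) (c' == e)%:R * g c' = g e.
Proof.
rewrite (bigD1 e) //= eqxx mul1r big1 ?addr0 // => c' /negbTE ->; by rewrite mul0r.
Qed.

Lemma trans_sum (R : realType) p n (c : config n) (g : config n -> R) :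
  \sum_(c' : config n) trans p c c' * g c' =
  \sum_(u : 'I_n) \sum_(v : 'I_n | u != v) (n%:R * (n%:R - 1))^-1 *
     \sum_(z : St) out p (c u) (c v) z * g (upd c v z).
Proof.
rewrite /trans.
transitivity (\sum_(c' : config n) \sum_(u : 'I_n) \sum_(v : 'I_n | u != v) \sum_(z : St)
   (n%:R * (n%:R - 1))^-1 * out p (c u) (c v) z * ((c' == upd c v z)%:R * g c')).
  apply eq_bigr => c' _; rewrite big_distrl; apply eq_bigr => u _; rewrite big_distrl.
  apply eq_bigr => v _ /=; rewrite -mulrA big_distrl mulr_sumr; apply eq_bigr => z _ /=.
  by rewrite !mulrA.
rewrite exchange_big; apply eq_bigr => u _; rewrite exchange_big; apply eq_bigr => v _.
rewrite exchange_big mulr_sumr; apply eq_bigr => z _.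
by rewrite -mulr_sumr sum_ind mulrA.
Qed.

Lemma sum_ind1 (R : realType) (T : finType) (e : T) :
  \sum_(c' : T) ((c' == e)%:R : R) = 1.
Proof. by rewrite (bigD1 e) //= eqxx big1 ?addr0 // => c' /negbTE ->. Qed.

Lemma sum_SAfalse (R : realType) :
  \sum_(z : St) ((if z is SA _ false then 1 else 0) : R) = 3.
Proof.
rewrite (bigD1 (SA 0 false)) //= (bigD1 (SA 1 false)) //= (bigD1 (SA 2 false)) //= big1.
  by rewrite addr0; lra.
case => // i [] //; case: i => [[|[|[|k]]] Hk] //=.
Qed.

Lemma out_ge0 (R : realType) (p : R) a b z : 0 <= p -> 2 * p <= 1 -> 0 <= out p a b z.
Proof.
move=> p0 p1; case: a => [|i ai|]; case: b => [|j bj|] //=; try by rewrite ler0n.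
- by case: z => [|? []|]; rewrite ?mulr1 ?mulr0 // invr_ge0 ler0n.
- case: ifP => _; first by rewrite ler0n.
  case: ifP => _; first by rewrite ler0n.
  apply: addr_ge0; apply: mulr_ge0; rewrite ?ler0n //; case: ai; lra.
Qed.

Lemma sum_two (R : realType) (q r : R) (A B : St) (h : St -> R) :
  \sum_z (q * (z == A)%:R + r * (z == B)%:R) * h z = q * h A + r * h B.
Proof.
under eq_bigr do rewrite mulrDl -!mulrA.
by rewrite big_split /= -!mulr_sumr !sum_ind.
Qed.

Lemma out_sum1 (R : realType) (p : R) a b : \sum_z out p a b z = 1.
Proof.
case: a => [|i ai|]; case: b => [|j bj|] //=; try exact: sum_ind1.
- by rewrite -mulr_sumr sum_SAfalse mulVf // pnatr_eq0.
- case E1: (j == i). exact: (@sum_ind1 R St (SA i true)).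
  case E2: (isucc i j); first exact: (@sum_ind1 R St (SA j false)).
  set q := (if ai then 2 * p else p).
  rewrite (eq_bigr (fun z => (q * (z == SA i false)%:R + (1 - q) * (z == SA j false)%:R) * 1)); last by move=> z _; rewrite mulr1.
  rewrite sum_two; ring.
Qed.

Lemma leave_le (R : realType) (p : R) i a b : 0 <= p -> 2 * p <= 1 -> isA i b ->
  \sum_z out p a b z * (~~ isA i z)%:R <= 2 * p + (a == SX)%:R.
Proof.
move=> p0 p1 Hb.
case: a => [|i' ai|].
- apply: (@le_trans _ _ (\sum_z out p SX b z)).
    apply: ler_sum => z _; rewrite -[X in _ <= X]mulr1; apply: ler_wpM2l; first exact: out_ge0.
    by case: (~~ isA i z); rewrite ?ler0n ?ler1n.
  by rewrite out_sum1 /= lerDr; lra.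
- case: b Hb => [|j bj|] //= /eqP Hj; subst j.
  case E1: (i == i').
    by rewrite (@sum_ind R St (SA i' true) (fun z => (~~ isA i z)%:R)) /= eq_sym E1 /= mulr0n addr0; lra.
  case E2: (isucc i' i).
    by rewrite (@sum_ind R St (SA i false) (fun z => (~~ isA i z)%:R)) /= eqxx /= mulr0n addr0; lra.
  rewrite (@sum_two R _ _ (SA i' false) (SA i false) (fun z => (~~ isA i z)%:R)) /= eqxx /= mulr0n mulr0 !addr0.
  case: (i' == i); rewrite /= ?mulr1 ?mulr0; case: ai; lra.
- case: b Hb => [|j bj|] //= /eqP ->.
  by rewrite (@sum_ind R St (SA i bj) (fun z => (~~ isA i z)%:R)) /= eqxx /= mulr0n; lra.
Qed.

Definition NA n (c : config n) (i : 'I_3) : nat := #|[set u | isA i (c u)]|.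

Lemma g_upd (R : realType) n (c : config n) v z i (lam : R) : 0 <= lam ->
  expR (- lam * (NA (upd c v z) i)%:R) <=
  expR (- lam * (NA c i)%:R) * (1 + (expR lam - 1) * (isA i (c v) && ~~ isA i z)%:R).
Proof.
move=> l0; have := NA_upd c v z i; rewrite /NA.
set N' := #|_|; set N := #|_|.
case: (isA i (c v)); case: (isA i z) => /= H.
- have -> : N' = N by lia. by rewrite mulr0 addr0 mulr1.
- have -> : N' = (N - 1)%N by lia.
  have HN : (1 <= N)%N by lia.
  rewrite natrB // mulr1 (_ : 1 + (expR lam - 1) = expR lam); last by ring.
  rewrite -expRD; rewrite le_eqVlt; apply/orP; left; apply/eqP; congr expR; ring.
- have -> : N' = (N + 1)%N by lia.
  rewrite mulr0 addr0 mulr1 ler_expR natrD; lra.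
- have -> : N' = N by lia. by rewrite mulr0 addr0 mulr1.
Qed.

Lemma sum_lin (R : realType) (F h : St -> R) (g k : R) :
  \sum_z F z * (g * (1 + k * h z)) = g * (\sum_z F z + k * \sum_z F z * h z).
Proof.
rewrite mulrDr [k * _]mulr_sumr !mulr_sumr -big_split; apply eq_bigr => z _ /=; ring.
Qed.

Lemma term_bound (R : realType) (p : R) n (c : config n) u v i (lam : R) :
  0 <= p -> 2 * p <= 1 -> 0 <= lam ->
  \sum_z out p (c u) (c v) z * expR (- lam * (NA (upd c v z) i)%:R) <=
  expR (- lam * (NA c i)%:R) *
    (1 + (expR lam - 1) * (isA i (c v))%:R * (2 * p + (c u == SX)%:R)).
Proof.
move=> p0 p1 l0.
apply: (@le_trans _ _ (\sum_z out p (c u) (c v) z * (expR (- lam * (NA c i)%:R) *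
   (1 + (expR lam - 1) * (isA i (c v) && ~~ isA i z)%:R)))).
  apply: ler_sum => z _; apply: ler_wpM2l; [exact: out_ge0 | exact: g_upd].
rewrite sum_lin out_sum1; apply: ler_wpM2l; first exact: expR_ge0.
have e1 : 0 <= expR lam - 1 by have := expR_ge1Dx lam; lra.
case Hb: (isA i (c v)) => /=.
  rewrite mulr1 lerD2l; apply: ler_wpM2l => //.
  exact: (@leave_le R p i (c u) (c v) p0 p1 Hb).
rewrite mulr0 mul0r; under eq_bigr do rewrite mulr0.
by rewrite big1 // mulr0.
Qed.

Lemma sum_neq_const (R : realType) n (u : 'I_n) (x : R) :
  \sum_(v : 'I_n | u != v) x = x * (n%:R - 1).
Proof.
have H : \sum_(v : 'I_n) x = x *+ n by rewrite sumr_const card_ord.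
move: H; rewrite (bigD1 u) //= (eq_bigl (fun v => u != v)); last by move=> v; rewrite eq_sym.
rewrite -mulr_natr => H; apply: (@addrI _ x); rewrite H; ring.
Qed.

Lemma sum_drop_neq (R : realType) n (u : 'I_n) (F : 'I_n -> R) : (forall v, 0 <= F v) ->
  \sum_(v : 'I_n | u != v) F v <= \sum_v F v.
Proof.
move=> F0; rewrite (eq_bigl (fun v => v != u)); last by move=> v; rewrite eq_sym.
rewrite [X in _ <= X](bigD1 u) //= -[X in X <= _]add0r; apply: lerD => //; exact: lexx.
Qed.

Lemma natr_card (R : realType) n (P : pred 'I_n) : (#|[set u | P u]|%:R : R) = \sum_u (P u)%:R.
Proof. by rewrite (@card_setsum _ P) natr_sum. Qed.

Lemma step_bound (R : realType) (p : R) n (c : config n) i (lam : R) :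
  0 <= p -> 2 * p <= 1 -> 0 <= lam -> (1 < n)%N ->
  \sum_(c' : config n) trans p c c' * expR (- lam * (NA c' i)%:R) <=
  expR (- lam * (NA c i)%:R) * (1 + (expR lam - 1) * (NA c i)%:R *
     (2 * p * n%:R + (numX c)%:R) / (n%:R * (n%:R - 1))).
Proof.
move=> p0 p1 l0 n1.
rewrite trans_sum.
set w := (n%:R * (n%:R - 1))^-1.
set g := expR (- lam * (NA c i)%:R).
set k := expR lam - 1.
have w0 : 0 <= w.
  rewrite /w invr_ge0; apply: mulr_ge0; rewrite ?ler0n // subr_ge0 ler1n; lia.
have k0 : 0 <= k by rewrite /k; have := expR_ge1Dx lam; lra.
have g0 : 0 <= g by exact: expR_ge0.
apply: (@le_trans _ _ (\sum_(u : 'I_n) \sum_(v : 'I_n | u != v)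
   (w * g + w * g * k * ((isA i (c v))%:R * (2 * p + (c u == SX)%:R))))).
  apply: ler_sum => u _; apply: ler_sum => v _.
  rewrite (_ : w * g + _ = w * (g * (1 + k * (isA i (c v))%:R * (2 * p + (c u == SX)%:R)))); last by ring.
  by apply: ler_wpM2l => //; exact: term_bound.
under eq_bigr do rewrite big_split /=.
rewrite big_split /=.
under eq_bigr do rewrite sum_neq_const.
rewrite sumr_const card_ord.
have wn : w * g * (n%:R - 1) *+ n = g.
  rewrite -mulr_natr /w; field.
  apply/andP; split; last by rewrite pnatr_eq0; lia.
  rewrite subr_eq0 pnatr_eq1; lia.
rewrite wn [X in _ <= X]mulrDr mulr1 lerD2l.
apply: (@le_trans _ _ (\sum_(u : 'I_n) \sum_(v : 'I_n)
   w * g * k * ((isA i (c v))%:R * (2 * p + (c u == SX)%:R)))).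
  apply: ler_sum => u _; apply: sum_drop_neq => v.
  apply: mulr_ge0; first by do 2 (apply: mulr_ge0 => //).
  apply: mulr_ge0; first by rewrite ler0n.
  apply: addr_ge0; rewrite ?ler0n //; lra.
have -> : \sum_(u : 'I_n) \sum_(v : 'I_n) w * g * k * ((isA i (c v))%:R * (2 * p + (c u == SX)%:R))
   = w * g * k * ((\sum_v (isA i (c v))%:R) * (\sum_u (2 * p + (c u == SX)%:R))).
  rewrite big_distrlr mulr_sumr exchange_big /=; apply eq_bigr => v _.
  rewrite mulr_sumr; apply eq_bigr => u _ /=; ring.
rewrite big_split /= sumr_const card_ord /NA /numX !natr_card.
rewrite -[_ *+ n]mulr_natr /w /=.
by rewrite le_eqVlt; apply/orP; left; apply/eqP; ring.
Qed.

Lemma trans_sum1 (R : realType) (p : R) n (c : config n) : (1 < n)%N ->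
  \sum_(c' : config n) trans p c c' = 1.
Proof.
move=> n1.
have := trans_sum p c (fun _ => 1).
under eq_bigr do rewrite mulr1.
move=> ->.
transitivity (\sum_(u : 'I_n) \sum_(v : 'I_n | u != v) (n%:R * (n%:R - 1) : R)^-1).
  apply eq_bigr => u _; apply eq_bigr => v _.
  rewrite (eq_bigr (fun z => out p (c u) (c v) z)); last by move=> z _; rewrite mulr1.
  by rewrite out_sum1 mulr1.
under eq_bigr do rewrite sum_neq_const.
rewrite sumr_const card_ord -mulr_natr; field.
apply/andP; split; last by rewrite pnatr_eq0; lia.
rewrite subr_eq0 pnatr_eq1; lia.
Qed.

Lemma stay_lb (R : realType) (p : R) n (I G : pred (config n)) (f : nat -> config n -> R) :
  (1 < n)%N ->
  (forall (c : config n) (u v : 'I_n) (z : St), I c -> out p (c u) (c v) z != 0 -> I (upd c v z)) ->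
  (forall k (c : config n), 0 <= f k c) ->
  (forall k (c : config n), I c -> ~~ G c -> 1 <= f k c) ->
  (forall k (c : config n), I c -> G c -> \sum_(c' : config n) trans p c c' * f k c' <= f k.+1 c) ->
  (forall (a b z : St), 0 <= out p a b z) ->
  forall k (c : config n), I c -> 1 - f k c <= stay p G k c.
Proof.
move=> n1 HI f0 fbad fstep out0 k.
elim: k => [|k IH] c Ic /=.
  case: (boolP (G c)) => Gc /=; first by have := f0 0%N c; lra.
  by have := fbad 0%N c Ic Gc; lra.
case: (boolP (G c)) => Gc /=; last by have := fbad k.+1 c Ic Gc; rewrite mul0r; lra.
rewrite mul1r.
apply: (@le_trans _ _ (\sum_(c' : config n) trans p c c' * (1 - f k c'))).
  under eq_bigr do rewrite mulrBr mulr1.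
  rewrite sumrB trans_sum1 //; have := fstep k c Ic Gc; lra.
rewrite !trans_sum; apply: ler_sum => u _; apply: ler_sum => v _.
apply: ler_wpM2l.
  rewrite invr_ge0; apply: mulr_ge0; rewrite ?ler0n // subr_ge0 ler1n; lia.
apply: ler_sum => z _.
case: (boolP (out p (c u) (c v) z == 0)) => [/eqP -> | Hz]; first by rewrite !mul0r.
apply: ler_wpM2l => //; apply: IH; exact: HI Hz.
Qed.

Lemma out_SX (R : realType) (p : R) a b z : out p a b z != 0 -> (z == SX) = (b == SX).
Proof.
case: a => [|i ai|]; case: b => [|j bj|]; case: z => [|k bk|] //=;
  rewrite ?eqxx ?mulr0 ?eqxx //;
  try (by case: ifP => _ //; case: ifP => _ //; rewrite ?mulr0 ?addr0 ?eqxx).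
by case: (j == i); case: (isucc i j); rewrite /= ?addr0 ?eqxx.
Qed.

Lemma numX_upd n (c : config n) v z : (z == SX) = (c v == SX) -> numX (upd c v z) = numX c.
Proof.
move=> H; rewrite /numX !card_setsum (bigD1 v) //= [in RHS](bigD1 v) //= /upd ffunE eqxx H.
congr (_ + _)%N; apply eq_bigr => w /negbTE Hw; by rewrite ffunE Hw.
Qed.

Lemma inv_numX (R : realType) (p : R) n (X0 : nat) (c : config n) (u v : 'I_n) (z : St) :
  numX c == X0 -> out p (c u) (c v) z != 0 -> numX (upd c v z) == X0.
Proof. by move=> H /out_SX /numX_upd ->. Qed.

Lemma expR_sub1_le (R : realType) (l : R) : 0 <= l -> l <= 1/2 -> expR l - 1 <= 2 * l.
Proof.
move=> l0 l1.
have h1 := expR_ge1Dx (- l).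
have h2 : expR l * expR (- l) = 1 by rewrite -expRD subrr expR0.
have h3 := expR_gt0 l.
nra.
Qed.

Lemma expR_m2y (R : realType) (y : R) : 0 <= y -> y <= 1/2 -> expR (- (2 * y)) <= 1 - y.
Proof.
move=> y0 y1.
have h1 := expR_ge1Dx (2 * y).
have h2 : expR (2 * y) * expR (- (2 * y)) = 1 by rewrite -expRD subrr expR0.
have h3 := expR_gt0 (- (2 * y)).
have h4 := expR_gt0 (2 * y).
nra.
Qed.

Lemma swap_sum (R : realType) (T : finType) (t : T -> R) (A : R) (G : 'I_3 -> T -> R) :
  \sum_(c' : T) t c' * (A * \sum_(i < 3) G i c') = A * \sum_(i < 3) \sum_(c' : T) t c' * G i c'.
Proof.
rewrite mulr_sumr; under [RHS]eq_bigr do rewrite mulr_sumr.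
rewrite [RHS]exchange_big /=; apply eq_bigr => c' _.
rewrite !mulr_sumr; apply eq_bigr => i _; ring.
Qed.

Definition fpot (R : realType) n (A l0 r : R) k (c : config n) : R :=
  A * \sum_(i < 3) expR (- (l0 * r ^+ k) * (NA c i)%:R).

Lemma super (R : realType) (p : R) n (X0 : nat) (A l0 : R) k (c : config n) :
  0 <= p -> 2 * p <= 1 -> (1 < n)%N -> 0 <= l0 -> l0 <= 1/2 -> 0 <= A ->
  let rho := (2 * p * n%:R + X0%:R) / (n%:R * (n%:R - 1)) in
  2 * rho <= 1 -> numX c = X0 ->
  \sum_(c' : config n) trans p c c' * fpot A l0 (1 - 2 * rho) k c' <= fpot A l0 (1 - 2 * rho) k.+1 c.
Proof.
move=> p0 p1 n1 l00 l01 A0 rho r1 HX.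
have rho0 : 0 <= rho.
  rewrite /rho; apply: divr_ge0; first by apply: addr_ge0; rewrite ?ler0n //; apply: mulr_ge0; rewrite ?ler0n //; lra.
  apply: mulr_ge0; rewrite ?ler0n // subr_ge0 ler1n; lia.
set r := 1 - 2 * rho.
have r0 : 0 <= r by rewrite /r; lra.
have r1' : r <= 1 by rewrite /r; lra.
rewrite /fpot.
rewrite swap_sum; apply: ler_wpM2l => //.
apply: ler_sum => i _.
set l := l0 * r ^+ k.
have l0' : 0 <= l by apply: mulr_ge0 => //; exact: exprn_ge0.
have l1 : l <= 1/2.
  apply: (@le_trans _ _ l0) => //; rewrite /l -[X in _ <= X]mulr1; apply: ler_wpM2l => //.
  exact: exprn_ile1.
apply: le_trans; first exact: (@step_bound R p n c i l p0 p1 l0' n1).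
rewrite HX -/rho.
set N := (NA c i)%:R.
have N0 : 0 <= N by rewrite ler0n.
have e1 := expR_sub1_le l0' l1.
have e0 : 0 <= expR l - 1 by have := expR_ge1Dx l; lra.
apply: (@le_trans _ _ (expR (- l * N) * expR (2 * l * N * rho))).
  apply: ler_wpM2l; first exact: expR_ge0.
  apply: le_trans; last exact: expR_ge1Dx.
  rewrite (_ : (expR l - 1) * N * (2 * p * n%:R + X0%:R) / (n%:R * (n%:R - 1)) = (expR l - 1) * N * rho); last by rewrite /rho; rewrite mulrA.
  rewrite lerD2l; apply: ler_wpM2r => //; apply: ler_wpM2r => //.
rewrite -expRD exprS ler_expR /l /r le_eqVlt; apply/orP; left; apply/eqP; ring.
Qed.


Lemma ord3 (i : 'I_3) : i = 0 \/ i = 1 \/ i = 2.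
Proof.
case: i => [[|[|[|k]]] Hk]; [left|right;left|right;right|]; try (by apply: val_inj).
by [].
Qed.

Lemma amin_le (R : realType) n (c : config n) i : amin (R:=R) c <= afrac c i.
Proof.
rewrite /amin; case: (ord3 i) => [->|[->|->]]; rewrite !ge_min lexx ?orbT //.
Qed.

Lemma isA_sum z : (\sum_(i < 3) isA i z <= 1)%N.
Proof.
case: z => [|j b|]; rewrite !big_ord_recr big_ord0 //=.
by case: (ord3 j) => [->|[->|->]].
Qed.

Lemma NA_sum n (c : config n) : (\sum_(i < 3) NA c i <= n)%N.
Proof.
rewrite /NA; under eq_bigr do rewrite card_setsum.
rewrite exchange_big /=.
apply: (@leq_trans (\sum_(u < n) 1)%N); last by rewrite sum1_card card_ord.
by apply: leq_sum => u _; exact: isA_sum.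
Qed.

Lemma amin_third (R : realType) n (c : config n) : (0 < n)%N -> amin (R:=R) c <= 1/3.
Proof.
move=> n0.
have h' : (NA c 0)%:R + (NA c 1)%:R + (NA c 2)%:R <= n%:R :> R.
  by rewrite -!natrD ler_nat; have := NA_sum c; rewrite !big_ord_recr big_ord0 /=.
have np : 0 < n%:R :> R by rewrite ltr0n.
have e (i : 'I_3) : amin (R:=R) c * n%:R <= (NA c i)%:R.
  by rewrite -ler_pdivlMr //; exact: amin_le.
have := e 0; have := e 1; have := e 2.
nra.
Qed.

Lemma bad_NA (R : realType) n (c : config n) (B : R) : (0 < n)%N ->
  ~~ (ln (1 / Num.max (1 / n%:R) (amin (R:=R) c)) <= B) ->
  1 / n%:R < expR (- B) /\ exists i, (NA c i)%:R < expR (- B) * n%:R.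
Proof.
move=> n0 Hb.
have np : 0 < n%:R :> R by rewrite ltr0n.
set M := Num.max (1 / n%:R) (amin (R:=R) c).
have M1 : 1 / n%:R <= M by rewrite le_max lexx.
have M2 : amin (R:=R) c <= M by rewrite le_max lexx orbT.
have Mp : 0 < M by apply: lt_le_trans M1; rewrite divr_gt0.
rewrite -ltNge div1r lnV ?posrE // in Hb.
have HM : M < expR (- B) by rewrite -[M](lnK) ?posrE // ltr_expR; lra.
split; first exact: le_lt_trans HM.
have Ha : amin (R:=R) c < expR (- B) by exact: le_lt_trans HM.
have Hi : exists i, afrac c i < expR (- B).
  move: Ha; rewrite /amin !gt_min => /orP [/orP [H|H]|H]; by eexists; exact: H.
case: Hi => i Hi; exists i.
by rewrite -ltr_pdivrMr.
Qed.

Unset Implicit Arguments.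

Lemma final_bound (R : realType) n (c0 : config n) (C : nat) (k : nat) (L rho : R) :
  1296 <= n%:R :> R -> 0 < amin (R:=R) c0 -> amin (R:=R) c0 <= 1/3 ->
  expR (- L) = amin (R:=R) c0 -> 0 <= L -> 1 <= C%:R :> R ->
  1 / n%:R < expR (- (100 * C%:R * L)) ->
  0 <= rho -> 16 * rho * n%:R <= 1 ->
  k%:R <= C%:R * n%:R * L ->
  fpot (expR (1/2 * (expR (- (100 * C%:R * L)) * n%:R))) (1/2) (1 - 2 * rho) k c0
    <= expR (- (n%:R : R) `^ (1/4)).
Proof.
move=> nge a0p a0le HL L0 C1 Htau rho0 rhon Hk.
set a0 := amin c0 in a0p a0le HL *.
have np : 0 < n%:R :> R by lra.
have rho16 : rho <= 1/16.
  have : 16 * rho * 1 <= 16 * rho * n%:R by apply: ler_wpM2l; lra.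
  lra.
set r := 1 - 2 * rho.
have r0 : 0 <= r by rewrite /r; lra.
have NAge : forall i, a0 * n%:R <= (NA c0 i)%:R.
  by move=> i; rewrite -ler_pdivlMr //; exact: amin_le.
set lk := 1/2 * r ^+ k.
have rk : expR (- (C%:R * L / 4)) <= r ^+ k.
  have h1 : expR (- (2 * (2 * rho))) <= r by apply: expR_m2y; lra.
  apply: (@le_trans _ _ (expR (- (2 * (2 * rho))) ^+ k)); last first.
    by apply: lerXn2r; rewrite ?nnegrE ?expR_ge0.
  rewrite -expRM_natr ler_expR.
  have h2 : k%:R * rho <= C%:R * n%:R * L * rho by apply: ler_wpM2r.
  have h3 : C%:R * L * (16 * rho * n%:R) <= C%:R * L * 1.
    by apply: ler_wpM2l => //; apply: mulr_ge0; lra.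
  lra.
have lk0 : 0 <= lk by rewrite /lk; apply: mulr_ge0; [lra | exact: exprn_ge0].
rewrite /fpot -/r -/lk.
apply: (@le_trans _ _ (expR (1 / 2 * (expR (- (100 * C%:R * L)) * n%:R)) * (3 * expR (- lk * (a0 * n%:R))))).
  apply: ler_wpM2l; first exact: expR_ge0.
  rewrite (_ : 3 * _ = \sum_(i < 3) expR (- lk * (a0 * n%:R))); last first.
    by rewrite sumr_const card_ord; exact: mulr_natl.
  apply: ler_sum => i _; rewrite ler_expR.
  have := NAge i; have := ler_wpM2l lk0 (NAge i); lra.
set Q := expR (- (2 * C%:R * L)).
have Q0 : 0 < Q := expR_gt0 _.
have CL : L <= C%:R * L.
  have : 0 <= (C%:R - 1) * L by apply: mulr_ge0; lra.
  lra.
have h5 : Q <= expR (- (C%:R * L / 4)) * a0.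
  rewrite -HL -expRD ler_expR; lra.
have h5' : 1/2 * Q * n%:R <= lk * (a0 * n%:R).
  have h7 : Q <= r ^+ k * a0 by apply: le_trans h5 _; apply: ler_wpM2r; lra.
  have h8 := ler_wpM2r (ltW np) h7.
  rewrite /lk; lra.
have h6 : expR (- (100 * C%:R * L)) <= Q / 3.
  have e : expR (- (100 * C%:R * L)) = Q * expR (- (98 * C%:R * L)).
    by rewrite -expRD; congr expR; ring.
  have e2 : expR (- (98 * C%:R * L)) <= a0 by rewrite -HL ler_expR; lra.
  rewrite e; have := ler_wpM2l (ltW Q0) e2; have := ler_wpM2l (ltW Q0) a0le; lra.
set t := ln (n%:R : R).
have nE : expR t = n%:R by rewrite /t lnK // posrE.
have Bt : 100 * C%:R * L < t.
  have : expR (- t) < expR (- (100 * C%:R * L)) by rewrite expRN nE -div1r.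
  rewrite ltr_expR; lra.
set E := expR (1/4 * t).
have E0 : 0 <= E := expR_ge0 _.
have QnE : E ^+ 2 <= Q * n%:R.
  rewrite -nE -expRD /E -expRM_natr ler_expR; lra.
have E6 : 6 <= E.
  have E4 : E ^+ 4 = n%:R.
    rewrite /E -expRM_natr -nE; congr (expR _); field; by rewrite ?pnatr_eq0.
  have E22 : E ^+ 4 = E ^+ 2 * E ^+ 2 by rewrite -exprD.
  have Esq : E ^+ 2 = E * E by rewrite expr2.
  rewrite E4 Esq in E22.
  case: (leP 6 E) => // HE.
  have h1 : E * E < 36 by nra.
  have h2 : E * E * (E * E) < 36 * 36 by nra.
  lra.
have l3 : ln (3 : R) < 3 by apply: ln_sublinear; lra.
have e3 : (3 : R) = expR (ln 3) by rewrite lnK // posrE.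
have pw : (n%:R : R) `^ (1/4) = E.
  by rewrite /powR (negbTE (lt0r_neq0 np)) /E /t.
have Esq : E ^+ 2 = E * E by rewrite expr2.
have hE := ler_wpM2l E0 E6.
have ht := ler_wpM2r (ltW np) h6.
rewrite Esq in QnE.
rewrite pw mulrCA {1}e3 -!expRD ler_expR.
lra.
Qed.

Theorem lemma18 (R : realType) :
  forall s : R, 0 < s <= 1 ->
  exists p0 : R, 0 < p0 /\
  forall p : R, 0 < p <= p0 ->
  exists c12 : R, 0 < c12 /\
  forall x : R, 0 < x < c12 ->
  forall C : nat, (0 < C)%N ->
  exists delta : R, 0 < delta /\
  exists n0 : nat,
  forall (n : nat) (c0 : config n), (n0 <= n)%N ->
    (numX c0)%:R = x * n%:R ->
    (numA c0)%:R = s * n%:R ->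
    0 < amin (R:=R) c0 ->
    let T := C%:R * n%:R * ln (1 / amin (R:=R) c0) in
    let good := fun c : config n =>
      ln (1 / Num.max (1 / n%:R) (amin (R:=R) c)) <= 100 * C%:R * ln (1 / amin (R:=R) c0) in
    forall k : nat, k%:R <= T ->
      1 - expR (- powR n%:R delta) <= stay p good k c0.
Proof.
move=> s Hs; exists (1/100); split; first lra.
move=> p /andP [p0 p1]; exists (1/100); split; first lra.
move=> x /andP [x0 x1] C HC; exists (1/4); split; first lra.
exists 1296%N => n c0 Hn HX HA Ha0 T good k Hk.
have n1 : (1 < n)%N by lia.
have n0 : (0 < n)%N by lia.
have np : 0 < n%:R :> R by rewrite ltr0n.
have nge : 1296 <= n%:R :> R by rewrite ler_nat.
have p2 : 2 * p <= 1 by lra.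
have out0 : forall a b z, 0 <= out p a b z by move=> a b z; apply: out_ge0 => //; lra.
have Cge1 : 1 <= C%:R :> R by rewrite ler1n.
set a0 := amin (R:=R) c0 in Ha0 T good Hk *.
set L := ln (1 / a0) in T good Hk *.
have a0le : a0 <= 1/3 by exact: amin_third.
have HL : expR (- L) = a0 by rewrite /L div1r lnV ?posrE // opprK lnK ?posrE.
have L0 : 0 <= L by rewrite /L div1r lnV ?posrE // oppr_ge0; apply: ln_le0; lra.
set B := 100 * C%:R * L in good *.
case: (leP (expR (- B)) (1 / n%:R)) => Htau.
  have Gall : forall c, good c.
    move=> c; apply/negPn/negP => Hb; have [h _] := bad_NA n0 Hb; lra.
  apply: le_trans (@stay_lb R p n predT good (fun _ _ => 0) n1 _ _ _ _ out0 k c0 isT).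
  - by rewrite subr0 lerBlDr lerDl expR_ge0.
  - by [].
  - by move=> *; exact: lexx.
  - by move=> k' c _; rewrite Gall.
  - by move=> k' c _ _; rewrite big1 // => c' _; rewrite mulr0.
set X0 := numX c0.
set rho := (2 * p * n%:R + X0%:R) / (n%:R * (n%:R - 1)).
have n1p : 0 < n%:R - 1 :> R by rewrite subr_gt0 ltr1n.
have n10 : n%:R - 1 != 0 :> R by rewrite lt0r_neq0.
have Hrho : rho = (2 * p + x) / (n%:R - 1).
  have n00 : n%:R != 0 :> R by rewrite lt0r_neq0.
  rewrite /rho /X0 HX; field; rewrite ?n00 ?n10 //.
have rho0 : 0 <= rho by rewrite Hrho; apply: divr_ge0; lra.
have rhon : 16 * rho * n%:R <= 1.
  have hq : 16 * (2 * p + x) <= 12/25 by lra.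
  have h : 16 * (2 * p + x) * n%:R <= n%:R - 1 by have := ler_wpM2r (ltW np) hq; lra.
  rewrite Hrho (_ : 16 * ((2 * p + x) / (n%:R - 1)) * n%:R = (16 * (2 * p + x) * n%:R) / (n%:R - 1)); last by rewrite !mulrA; ring.
  by rewrite ler_pdivrMr // mul1r.
have rho1 : 4 * rho <= 1.
  have : 16 * rho * 1 <= 16 * rho * n%:R by apply: ler_wpM2l; lra.
  lra.
set r := 1 - 2 * rho.
have r0 : 0 <= r by rewrite /r; lra.
have r1 : r <= 1 by rewrite /r; lra.
set A := expR (1/2 * (expR (- B) * n%:R)).
have A0 : 0 <= A := expR_ge0 _.
have fbad : forall k' (c : config n), numX c == X0 -> ~~ good c -> 1 <= fpot A (1/2) r k' c.
  move=> k' c _ Gc; have [_ [i Hi]] := bad_NA n0 Gc.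
  rewrite /fpot (bigD1 i) //=.
  apply: (@le_trans _ _ (A * expR (- (1 / 2 * r ^+ k') * (NA c i)%:R))).
    rewrite /A -expRD; apply: (@le_trans _ _ (expR 0)); first by rewrite expR0.
    rewrite ler_expR.
    have h1 := exprn_ile1 k' r0 r1; have h2 := exprn_ge0 k' r0.
    have h3 : 0 <= (NA c i)%:R :> R by rewrite ler0n.
    have h4 : r ^+ k' * (NA c i)%:R <= (NA c i)%:R.
      by rewrite -[X in _ <= X]mul1r; apply: ler_wpM2r.
    lra.
  apply: ler_wpM2l => //; rewrite lerDl; apply: sumr_ge0 => j _; exact: expR_ge0.
have h12 : (0:R) <= 1/2 by lra.
have h12' : (1/2:R) <= 1/2 by lra.
have r2 : 2 * rho <= 1 by lra.
have main := @stay_lb R p n (fun c => numX c == X0) good (fpot A (1/2) r) n1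
  (fun c u v z H1 H2 => inv_numX H1 H2)
  (fun k' c => mulr_ge0 A0 (sumr_ge0 _ (fun j _ => expR_ge0 _)))
  fbad
  (fun k' c Ic _ => @super R p n X0 A (1/2) k' c (ltW p0) p2 n1 h12 h12' A0 r2 (eqP Ic))
  out0 k c0 (eqxx _).
apply: le_trans main; rewrite lerD2l lerN2.
exact: (@final_bound R n c0 C k L rho nge Ha0 a0le HL L0 Cge1 Htau rho0 rhon Hk).
Qed.
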